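(* Let $m\geq 0$ and $k\geq 1$ be integers and let $n$ be a nonnegative integer with $n<t(m+1,k)$, where \[ t(s,k)= s\left(\left\lfloor \frac{s}{k}\right\rfloor +1\right)k-\binom{\lfloor s/k\rfloor +1}{2}k^2 . \] Then $b(n,k)\leq m$.
   Context: For a cell $u$ of the Young diagram of a partition $\lambda$, the hook length of $u$ is the number of cells $v$ of the diagram with $v=u$, or $v$ below $u$ in the same column, or $v$ to the right of $u$ in the same row. $\alpha_k(\lambda)$ is the number of cells of the Young diagram of $\lambda$ with hook length exactly $k$. $P(n)$ is the set of partitions of $n$ (with $P(0)$ containing only the empty partition), and $b(n,k)=\max\{\alpha_k(\lambda)\colon\lambda\in P(n)\}$. *)

(* Defs.v *)
From mathcomp Require Import all_boot.
Set Implicit Arguments. Unset Strict Implicit. Unset Printing Implicit Defensive.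

Definition is_partition (n : nat) (l : seq nat) : bool :=
  [&& sorted geq l, all (fun x => 0 < x) l & sumn l == n].

(* Young diagram of l: cells (i, j) with i < size l and j < nth 0 l i
   (row i, column j, rows indexed top to bottom). *)
(* hook length of cell (i,j): the cell itself, the cells to its right in row i,
   and the cells below it in column j. *)
Definition hook_length (l : seq nat) (i j : nat) : nat :=
  1 + (nth 0 l i - j.+1) + count (fun x => j < x) (drop i.+1 l).

Definition alpha (k : nat) (l : seq nat) : nat :=
  \sum_(i < size l) \sum_(j < nth 0 l i) (hook_length l i j == k).

(* Every partition of n has at most n parts, each at most n; padding with zeros
   gives an n-tuple over 'I_n.+1. part_of drops the zero entries. *)
Definition part_of (n : nat) (t : n.-tuple 'I_n.+1) : seq nat :=
  filter (fun x => 0 < x) (map val t).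

Definition b (n k : nat) : nat :=
  \max_(t : n.-tuple 'I_n.+1 | is_partition n (part_of t)) alpha k (part_of t).

Definition tfun (s k : nat) : nat :=
  s * (s %/ k + 1) * k - 'C(s %/ k + 1, 2) * k ^ 2.

(* Main.v *)
Require Import Defs.
From mathcomp Require Import all_boot zify ring.
Set Implicit Arguments. Unset Strict Implicit.

Definition T (k s : nat) := \sum_(j < s) (j %/ k).+1.

Lemma T_mono k s1 s2 : s1 <= s2 -> T k s1 <= T k s2.
Proof.
move=> /subnK <-; elim: (s2 - s1) => [|d IH] //=.
by rewrite addSn /T big_ord_recr /= -/(T k (d + s1)); apply: leq_trans IH (leq_addr _ _).
Qed.

Lemma T_closed k s : 0 < k ->
  k * T k s + 'C(s %/ k + 1, 2) * k ^ 2 = s * (s %/ k + 1) * k.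
Proof.
move=> k0; elim: s => [|s IH]; first by rewrite /T big_ord0 div0n muln0.
rewrite /T big_ord_recr /= -/(T k s).
have Hs := divn_eq s k; have Hr := ltn_pmod s k0.
set q := s %/ k in IH Hs *; set r := s %% k in Hs Hr.
have C2 : forall n, 'C(n.+1, 2) = 'C(n, 2) + n by move=> n; rewrite binS bin1.
case: (ltngtP r.+1 k) => Hrk.
- have -> : s.+1 %/ k = q.
    by rewrite Hs -addnS divnMDl // divn_small // addn0.
  nia.
- lia.
- have -> : s.+1 %/ k = q.+1.
    by rewrite Hs -addnS Hrk -mulSnr mulnK.
  rewrite !addn1 in IH *; rewrite C2.
  move: IH; set C := 'C(q.+1, 2); set TT := T k s => IH.
  have -> : k * (TT + q.+1) + (C + q.+1) * k ^ 2 = (k * TT + C * k ^ 2) + (k * q.+1 + q.+1 * k ^ 2).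
    by ring.
  rewrite IH Hs -Hrk; ring.
Qed.

Lemma tfun_T k s : 0 < k -> tfun s k = k * T k s.
Proof. move=> k0; rewrite /tfun -(@T_closed k s k0); lia. Qed.

Lemma sumn_sorted a s : sorted ltn s -> all (leq a) s ->
  'C(size s, 2) + a * size s <= sumn s.
Proof.
elim: s a => [|x s IH] a; first by rewrite /= muln0.
move=> /= Hs /andP [ax Ha].
have Hall : all (leq x.+1) s by have := order_path_min ltn_trans Hs.
have := IH x.+1 (path_sorted Hs) Hall.
rewrite -[(size s).+1]addn1 addn1 binS bin1; nia.
Qed.

Lemma sumn_uniq s : uniq s -> 'C(size s, 2) <= sumn s.
Proof.
move=> Us; have P := perm_sort leq s.
have : sorted ltn (sort leq s).
  by rewrite ltn_sorted_uniq_leq (perm_uniq (permEl P)) Us sort_sorted //; exact: leq_total.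
move=> /(sumn_sorted (a:=0)) H.
have -> : sumn s = sumn (sort leq s) by rewrite !sumnE; apply: perm_big; rewrite perm_sym; exact: permEl.
rewrite -(perm_size (permEl P)).
by apply: leq_trans (H _) ; [rewrite addn0 | apply/allP].
Qed.



Definition cc (k : nat) (S : seq nat) (x : nat) :=
  count (fun y => (y <= x) && (y %% k == x %% k)) S.

Lemma sum_count (s : seq nat) (P : pred nat) : \sum_(z <- s) (P z : nat) = count P s.
Proof. by elim: s => [|a s IH]; rewrite ?big_nil ?big_cons ?IH. Qed.

Lemma size_sum_res k (E : seq nat) : 0 < k ->
  size E = \sum_(r < k) count (fun y => y %% k == r) E.
Proof.
move=> k0; elim: E => [|a E IH]; first by rewrite big1.
rewrite /= big_split /= -IH -add1n; congr (_ + _).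
rewrite (bigD1 (Ordinal (ltn_pmod a k0))) //= eqxx big1 // => i Hi.
by apply/eqP; rewrite eqb0; apply: contra Hi => /eqP Ha; apply/eqP/val_inj; rewrite /= Ha.
Qed.

Lemma pigeon k (E : seq nat) s : 0 < k -> size E = s.+1 ->
  exists2 x, x \in E & s %/ k < count (fun y => y %% k == x %% k) E.
Proof.
move=> k0 HE.
case: (boolP (has (fun x => s %/ k < count (fun y => y %% k == x %% k) E) E)).
  by move=> /hasP [x xE Hx]; exists x.
move=> /hasPn Hn; exfalso.
have : s.+1 <= k * (s %/ k).
  rewrite -HE (@size_sum_res k E k0).
  apply: leq_trans (_ : \sum_(r < k) s %/ k <= _); last by rewrite sum_nat_const card_ord.
  apply: leq_sum => r _.
  case: (boolP (has (fun y => y %% k == r) E)).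
    move=> /hasP [x xE /eqP <-]; have := Hn x xE; by rewrite -leqNgt.
  by move=> /hasPn H; rewrite (eq_in_count (a2 := pred0)) ?count_pred0 // => y /H /negbTE.
have := leq_divM s k; rewrite mulnC; lia.
Qed.

Lemma P5 k : 0 < k -> forall E, uniq E -> T k (size E) <= \sum_(x <- E) cc k E x.
Proof.
move=> k0 E; move HE: (size E) => n; elim: n E HE => [|s IH] E HE UE.
  by rewrite /T big_ord0.
have [x xE Hx] := @pigeon k E s k0 HE.
set E' := rem x E.
have Hp : perm_eq E (x :: E') by exact: perm_to_rem.
have sE' : size E' = s by rewrite size_rem // HE.
have IH' := IH E' sE' (rem_uniq x UE).
rewrite (perm_big _ Hp) big_cons.
have Hc : forall z, cc k E z = ((x <= z) && (x %% k == z %% k)) + cc k E' z.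
  by move=> z; rewrite /cc (permP Hp).
rewrite (eq_bigr _ (fun z _ => Hc z)) big_split /= sum_count.
rewrite /T big_ord_recr /= -/(T k s).
have Hx' : count (fun y => y %% k == x %% k) E =
   1 + count (fun y => y %% k == x %% k) E' by rewrite (permP Hp) /= eqxx.
have H1 : count (fun y => y %% k == x %% k) E' <=
   cc k E' x +
   count (fun z => (x <= z) && (x %% k == z %% k)) E'.
  rewrite /cc -count_predUI; apply: leq_trans (leq_addr _ _).
  apply: sub_count => y /= /eqP ->; rewrite eqxx !andbT; exact: leq_total.
have Hcx : cc k E x = 1 + cc k E' x by rewrite Hc leqnn eqxx.
rewrite Hcx; rewrite Hx' in Hx.
move: IH'; set S := (\sum_(_ <- _) _) => IH'.
lia.
Qed.



Definition rk (k : nat) (X : seq nat) (x : nat) :=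
  count (fun z => (z < x) && (z %% k == x %% k)) X.
Definition desc (k : nat) (X : seq nat) (y : nat) := (k <= y) && (y - k \notin X).

Lemma mod_sub k y : k <= y -> (y - k) %% k = y %% k.
Proof. by move=> ky; rewrite -{2}(subnK ky) modnDr. Qed.

Lemma div_lt k z x : 0 < k -> z < x -> z %% k = x %% k -> z %/ k < x %/ k.
Proof.
move=> k0 zx Hm; rewrite -(ltn_pmul2r k0).
have := divn_eq z k; have := divn_eq x k; lia.
Qed.

Lemma P3 k X x : 0 < k -> uniq X ->
  rk k X x + cc k (filter (desc k X) X) x <= x %/ k.
Proof.
move=> k0 UX.
set B := filter (fun z => (z < x) && (z %% k == x %% k)) X.
set D := map (fun y => y - k)
   (filter (fun y => (y <= x) && (y %% k == x %% k)) (filter (desc k X) X)).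
have -> : rk k X x + cc k (filter (desc k X) X) x = size (B ++ D).
  by rewrite size_cat size_map !size_filter.
have HL : forall z, z \in B ++ D -> (z < x) && (z %% k == x %% k).
  move=> z; rewrite mem_cat => /orP [|].
    by rewrite mem_filter => /andP [].
  move=> /mapP [y]; rewrite !mem_filter => /andP [/andP [yx /eqP ym]] /andP [/andP [ky _] _] ->.
  rewrite mod_sub // ym eqxx andbT; lia.
have UL : uniq (B ++ D).
  rewrite cat_uniq filter_uniq //= andbC; apply/andP; split.
    rewrite map_inj_in_uniq; first by rewrite !filter_uniq.
    move=> y1 y2; rewrite !mem_filter => /andP [_ /andP [/andP [k1 _] _]] /andP [_ /andP [/andP [k2 _] _]].
    lia.
  apply/hasPn => z /mapP [y]; rewrite !mem_filter => /andP [_ /andP [/andP [_ Hy] _]] ->.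
  by rewrite negb_and Hy orbT.
rewrite -(size_map (fun z => z %/ k)) -[x %/ k](size_iota 0).
apply: uniq_leq_size.
  rewrite map_inj_in_uniq // => z1 z2 H1 H2 Hd.
  move: (HL _ H1) (HL _ H2) => /andP [_ /eqP m1] /andP [_ /eqP m2].
  by rewrite (divn_eq z1 k) (divn_eq z2 k) Hd m1 m2.
move=> _ /mapP [z Hz ->]; rewrite mem_iota add0n /=.
move: (HL _ Hz) => /andP [zx /eqP zm]; exact: div_lt.
Qed.

Lemma rk_lt k X x1 x2 : uniq X -> x1 \in X -> x1 < x2 -> x1 %% k = x2 %% k ->
  rk k X x1 < rk k X x2.
Proof.
move=> UX x1X lt12 m12.
have H : count (fun z => ((z < x1) && (z %% k == x1 %% k)) || (z == x1)) X <= rk k X x2.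
  apply: sub_count => z /= /orP [/andP [zx /eqP zm]|/eqP ->].
    by rewrite zm m12 eqxx andbT; apply: leq_trans lt12; exact: ltnW.
  by rewrite lt12 m12 eqxx.
have H2 := count_predUI (fun z => (z < x1) && (z %% k == x1 %% k)) (pred1 x1) X.
have H3 : count (predI (fun z => (z < x1) && (z %% k == x1 %% k)) (pred1 x1)) X = 0.
  by apply/eqP; rewrite -leqn0 -(count_pred0 X); apply: sub_count => z /= /andP [/andP [zx _] /eqP zE]; move: zx; rewrite zE ltnn.
have H4 : count (pred1 x1) X = 1 by rewrite count_uniq_mem // x1X.
have H5 : count (predU (fun z => (z < x1) && (z %% k == x1 %% k)) (pred1 x1)) X = rk k X x1 + 1.
  by rewrite -H4 -H2 H3 addn0.
have H6 : count (predU (fun z => (z < x1) && (z %% k == x1 %% k)) (pred1 x1)) X <= rk k X x2 by [].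
rewrite H5 addn1 in H6; exact: H6.
Qed.

Definition pack k X x := rk k X x * k + x %% k.

Lemma pack_uniq k X : 0 < k -> uniq X -> uniq (map (pack k X) X).
Proof.
move=> k0 UX; rewrite map_inj_in_uniq // => x1 x2 H1 H2 Hp.
have Hm : x1 %% k = x2 %% k.
  by move: (congr1 (modn^~ k) Hp); rewrite /pack !modnMDl !modn_mod.
have Hr : rk k X x1 = rk k X x2.
  by move: (congr1 (divn^~ k) Hp); rewrite /pack !divnMDl // !divn_small ?ltn_pmod // !addn0.
case: (ltngtP x1 x2) => // Hlt.
  by have := rk_lt UX H1 Hlt Hm; rewrite Hr ltnn.
by have := rk_lt UX H2 Hlt (esym Hm); rewrite Hr ltnn.
Qed.

Lemma mainX k X : 0 < k -> uniq X ->
  'C(size X, 2) + k * \sum_(x <- X) cc k (filter (desc k X) X) x <= sumn X.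
Proof.
move=> k0 UX.
have H1 := sumn_uniq (pack_uniq k0 UX); rewrite size_map in H1.
apply: leq_trans (leq_add H1 (leqnn _)) _.
rewrite sumnE big_map big_distrr /= -big_split /= sumnE.
apply: leq_sum => x _.
have := @P3 k X x k0 UX; have := divn_eq x k; rewrite /pack; nia.
Qed.


Definition xv (l : seq nat) i := nth 0 l i + ((size l).-1 - i).
Definition Xl (l : seq nat) := map (xv l) (iota 0 (size l)).

Lemma srt l a b : sorted geq l -> a <= b -> b < size l -> nth 0 l b <= nth 0 l a.
Proof.
move=> Hs ab bl.
have tr : transitive geq by move=> x y z /= h1 h2; exact: leq_trans h2 h1.
have := sorted_leq_nth tr (fun x => leqnn x) 0 Hs; move=> /(_ a b) H.
apply: H => //; rewrite inE; lia.
Qed.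

Lemma cnt_lb (P : pred nat) s n : n <= size s ->
  (forall p, p < n -> P (nth 0 s p)) -> n <= count P s.
Proof.
elim: s n => [|a s IH] [|n] //= Hn HP.
have := HP 0 isT => ->; rewrite add1n ltnS; apply: IH => // p Hp.
exact: (HP p.+1).
Qed.

Lemma cnt_ub (P : pred nat) s n :
  (forall p, n <= p -> p < size s -> ~~ P (nth 0 s p)) -> count P s <= n.
Proof.
elim: s n => [|a s IH] n //= HP.
case: n HP => [|n] HP.
  have := HP 0 isT isT => /negbTE ->; rewrite add0n; apply: IH => p _ Hp.
  exact: (HP p.+1).
rewrite -add1n; apply: leq_add; first by case: (P a).
by apply: IH => p Hp1 Hp2; exact: (HP p.+1).
Qed.

Lemma xv_lt l i i' : sorted geq l -> i < i' -> i' < size l -> xv l i' < xv l i.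
Proof.
move=> Hs ii' i'r; have := srt Hs (ltnW ii') i'r; rewrite /xv; lia.
Qed.

Lemma Xl_uniq l : sorted geq l -> uniq (Xl l).
Proof.
move=> Hs; rewrite map_inj_in_uniq ?iota_uniq // => a b; rewrite !mem_iota !add0n => /andP [_ Ha] /andP [_ Hb] Hab.
case: (ltngtP a b) => // H.
  by have := xv_lt Hs H Hb; rewrite Hab ltnn.
by have := xv_lt Hs H Ha; rewrite Hab ltnn.
Qed.

Lemma sum_rev r : \sum_(0 <= i < r) (r.-1 - i) = 'C(r, 2).
Proof.
elim: r => [|r IH]; first by rewrite big_nil.
rewrite big_nat_recl // /= subn0 binS bin1 addnC; congr (_ + _).
by rewrite -IH; apply: eq_bigr => i _; lia.
Qed.

Lemma Xl_sum l : sumn (Xl l) = sumn l + 'C(size l, 2).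
Proof.
rewrite /Xl sumnE big_map /xv big_split /= -sum_rev /index_iota subn0.
by rewrite [sumn l]sumnE [in RHS](big_nth 0) /index_iota subn0.
Qed.

Lemma hook_dec l i j j' : j < j' -> j' < nth 0 l i ->
  hook_length l i j' < hook_length l i j.
Proof.
move=> jj' j'l; rewrite /hook_length.
have : count (fun x => j' < x) (drop i.+1 l) <= count (fun x => j < x) (drop i.+1 l).
  by apply: sub_count => x /= H; exact: ltn_trans jj' H.
lia.
Qed.

Lemma hook_desc k l i j : 0 < k -> sorted geq l -> i < size l -> j < nth 0 l i ->
  hook_length l i j = k -> desc k (Xl l) (xv l i).
Proof.
move=> k0 Hs il jl; rewrite /hook_length.
set c := count (fun x => j < x) (drop i.+1 l) => Hk.
have cr : c <= size l - i.+1 by rewrite -size_drop; exact: count_size.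
apply/andP; split; first by rewrite /xv; lia.
apply/negP => /mapP [i']; rewrite mem_iota add0n => /andP [_ Hi'] Heq.
case: (leqP i' i) => Hii'.
  have : xv l i <= xv l i'.
    case: (ltngtP i' i) Hii' => // H _; last by rewrite H.
    exact: ltnW (xv_lt Hs H il).
  move: Heq; rewrite /xv; lia.
have Hsd : size (drop i.+1 l) = size l - i.+1 by rewrite size_drop.
case: (ltnP j (nth 0 l i')) => Hj.
  have : i' - i <= c.
    apply: cnt_lb; first by rewrite Hsd; lia.
    move=> p Hp; rewrite nth_drop /=.
    have := srt Hs (_ : i.+1 + p <= i') Hi'; move=> /(_ ltac:(lia)); lia.
  move: Heq; rewrite /xv; lia.
have : c <= i' - i.+1.
  apply: cnt_ub => p Hp1 Hp2; rewrite nth_drop /= -leqNgt.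
  rewrite Hsd in Hp2.
  have := srt Hs (_ : i' <= i.+1 + p) (_ : i.+1 + p < size l); move=> /(_ ltac:(lia) ltac:(lia)); lia.
move: Heq; rewrite /xv; lia.
Qed.


Lemma row_sum k l i : 0 < k -> sorted geq l -> i < size l ->
  \sum_(j < nth 0 l i) (hook_length l i j == k) <= desc k (Xl l) (xv l i).
Proof.
move=> k0 Hs il.
case: (boolP [exists j : 'I_(nth 0 l i), hook_length l i j == k]).
  move=> /existsP [j0 /eqP Hj0].
  rewrite (hook_desc k0 Hs il (ltn_ord j0) Hj0).
  rewrite (bigD1 j0) //= Hj0 eqxx big1 // => j Hj.
  apply/eqP; rewrite eqb0 -Hj0; apply/eqP => Heq.
  case: (ltngtP (val j) (val j0)) => H.
  - by have := hook_dec H (ltn_ord j0); rewrite Heq ltnn.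
  - by have := hook_dec H (ltn_ord j); rewrite Heq ltnn.
  - by move: Hj; rewrite (val_inj H) eqxx.
move=> /existsPn Hn; rewrite big1 // => j _; by rewrite (negbTE (Hn j)).
Qed.

Lemma alpha_bound k l : 0 < k -> sorted geq l ->
  alpha k l <= count (desc k (Xl l)) (Xl l).
Proof.
move=> k0 Hs; rewrite {2}/Xl count_map -sum_count.
have -> : iota 0 (size l) = index_iota 0 (size l) by rewrite /index_iota subn0.
rewrite big_mkord /alpha; apply: leq_sum => i _.
exact: row_sum.
Qed.


Theorem corollary3p3 (m k n : nat) :
  1 <= k -> n < tfun m.+1 k -> b n k <= m.
Proof.
move=> k0 Hn; rewrite /b; apply/bigmax_leqP => t /and3P [Hs _ /eqP Hsum].
move: Hs Hsum; set l := part_of t => Hs Hsum.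
rewrite leqNgt; apply/negP => Ha.
have UX := Xl_uniq Hs.
set X := Xl l in UX.
set E := filter (desc k X) X.
have H1 := mainX k0 UX.
have sX : size X = size l by rewrite /X /Xl size_map size_iota.
have H2 : sumn X = sumn l + 'C(size l, 2) by exact: Xl_sum.
have H3 : \sum_(x <- E) cc k E x <= \sum_(x <- X) cc k E x.
  rewrite /E big_filter [in X in _ <= X](bigID (desc k X)) /=; exact: leq_addr.
have H4 := P5 k0 (filter_uniq (desc k X) UX).
have H5 : m.+1 <= size E by rewrite /E size_filter; apply: leq_trans Ha (alpha_bound k0 Hs).
have H6 := T_mono k H5.
have H7 := tfun_T m.+1 k0.
rewrite -/E in H1.
move: H1; rewrite sX H2 Hsum => H1.
have : k * T k m.+1 <= k * \sum_(x <- X) cc k E x.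
  apply: leq_mul => //; apply: leq_trans H6 (leq_trans H4 H3).
move: H1 H7 Hn; set S := (\sum_(_ <- X) _); move=> H1 H7 Hn H8.
lia.
Qed.
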